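(* Let $P,Q\in\mathbb{H}[q_1,q_2]$. Then: (1) ${\rm Res}(P,Q;q_1)\equiv 0$ if and only if there exist non-zero $H,K\in\mathbb{H}[q_1,q_2]$, written as polynomials in $q_1$ with coefficients in $\mathbb{H}[q_2]$, with $\deg_{q_1}H<\deg_{q_1}Q$ and $\deg_{q_1}K<\deg_{q_1}P$, such that $P*H+Q*K\equiv 0$; (2) ${\rm Res}(P,Q;q_2)\equiv 0$ if and only if there exist non-zero $\tilde H,\tilde K\in\mathbb{H}[q_1,q_2]$, written as $*$-polynomials in $q_2$ with coefficients in $\mathbb{H}[q_1]$, with $\deg_{q_2}\tilde H<\deg_{q_2}Q$ and $\deg_{q_2}\tilde K<\deg_{q_2}P$, such that $P*\tilde H+Q*\tilde K\equiv 0$.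
   Context: $\mathbb{H}$ denotes the quaternions. A slice regular polynomial in two quaternionic variables is a function $\mathbb{H}^2\to\mathbb{H}$ of the form $P(q_1,q_2)=\sum_{n=0}^{N}\sum_{m=0}^{M}q_1^nq_2^ma_{n,m}$ with $a_{n,m}\in\mathbb{H}$ (coefficients on the right); $\deg_{q_1}P$, $\deg_{q_2}P$ are the degrees in $q_1$, $q_2$. The set of these is $\mathbb{H}[q_1,q_2]$, and $\mathbb{H}[q]$ denotes the analogous one-variable polynomials $\sum q^na_n$. The $*$-product is defined by $\big(\sum q_1^nq_2^ma_{n,m}\big)*\big(\sum q_1^nq_2^mb_{n,m}\big)=\sum_{n,m}q_1^nq_2^m\sum_{r\le n,s\le m}a_{r,s}b_{n-r,m-s}$ (and analogously in one variable); $(\mathbb{H}[q],+,* )$ is a left and right Ore domain and we let $\mathcal{L}$ be its skew field of quotients. Every $P\in\mathbb{H}[q_1,q_2]$ can be written as $P=\sum_{k=0}^{n}q_1^kP_k(q_2)$ with $P_k\in\mathbb{H}[q_2]$, and as $P=\sum_{k=0}^{r}q_2^k*\tilde P_k(q_1)$ with $\tilde P_k\in\mathbb{H}[q_1]$. Dieudonné determinant: for a skew field $(\mathbb F,+,\star)$, let $\overline{\mathbb F}^\star$ be the abelianization of its multiplicative group; ${\rm Det}^\star_N$ is the unique homomorphism $GL(N,\mathbb F)\to\overline{\mathbb F}^\star$ sending ${\rm diag}(\lambda_1,\dots,\lambda_N)$ to the class of $\lambda_1\star\cdots\star\lambda_N$, extended by the value $[0]$ on non-invertible matrices. Here ${\rm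 Det}^*_N$ is this determinant over $\mathcal L$; for a matrix with entries in $\mathbb{H}[q]$ its value has a slice regular polynomial representative, unique up to commutators, with which it is identified. Regular resultants: let $P=\sum_{k=0}^nq_1^kP_k(q_2)$, $Q=\sum_{k=0}^mq_1^kQ_k(q_2)$. The Sylvester matrix $A(q_2)$ is the $(n+m)\times(n+m)$ matrix whose $j$-th column ($1\le j\le m$) has entries $P_0,\dots,P_n$ in rows $j,\dots,j+n$ and zeros elsewhere, and whose $(m+j)$-th column ($1\le j\le n$) has entries $Q_0,\dots,Q_m$ in rows $j,\dots,j+m$ and zeros elsewhere; ${\rm Res}(P,Q;q_1):={\rm Det}^*_{n+m}(A(q_2))$. Likewise, with $P=\sum_{k=0}^rq_2^k*\tilde P_k(q_1)$, $Q=\sum_{k=0}^sq_2^k*\tilde Q_k(q_1)$, $B(q_1)$ is the $(r+s)\times(r+s)$ matrix built in the same way from $\tilde P_0,\dots,\tilde P_r$ (first $s$ columns) and $\tilde Q_0,\dots,\tilde Q_s$ (last $r$ columns), and ${\rm Res}(P,Q;q_2):={\rm Det}^*_{r+s}(B(q_1))$. ''${\rm Res}\equiv0$'' means the determinant is the zero class. *)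

(* Defs.v *)
From HB Require Import structures.
From mathcomp Require Import all_boot all_order all_algebra.
From mathcomp Require Import reals.
From mathcomp Require Import ring.
Set Implicit Arguments. Unset Strict Implicit. Unset Printing Implicit Defensive.
Import Order.TTheory GRing.Theory Num.Theory.
Local Open Scope ring_scope.

Section Quaternions.
Variable R : realType.

Record quat := Quat { qre : R; qi : R; qj : R; qk : R }.

Definition quat2tuple (x : quat) := (qre x, qi x, qj x, qk x).
Definition tuple2quat (t : R * R * R * R) := let: (a, b, c, d) := t in Quat a b c d.
Lemma quat2tupleK : cancel quat2tuple tuple2quat. Proof. by case. Qed.

HB.instance Definition _ := Equality.copy quat (can_type quat2tupleK).
HB.instance Definition _ := Choice.copy quat (can_type quat2tupleK).

Definition qzero := Quat 0 0 0 0.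
Definition qone := Quat 1 0 0 0.
Definition qopp x := Quat (- qre x) (- qi x) (- qj x) (- qk x).
Definition qadd x y := Quat (qre x + qre y) (qi x + qi y) (qj x + qj y) (qk x + qk y).
(* Hamilton product: i^2 = j^2 = k^2 = ijk = -1 *)
Definition qmul x y := Quat
  (qre x * qre y - qi x * qi y - qj x * qj y - qk x * qk y)
  (qre x * qi y + qi x * qre y + qj x * qk y - qk x * qj y)
  (qre x * qj y - qi x * qk y + qj x * qre y + qk x * qi y)
  (qre x * qk y + qi x * qj y - qj x * qi y + qk x * qre y).

Lemma qaddA : associative qadd.
Proof. by case=> ????[????][????]; congr Quat => /=; ring. Qed.
Lemma qaddC : commutative qadd.
Proof. by case=> ????[????]; congr Quat => /=; ring. Qed.
Lemma qadd0 : left_id qzero qadd.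
Proof. by case=> ????; congr Quat => /=; ring. Qed.
Lemma qaddN : left_inverse qzero qopp qadd.
Proof. by case=> ????; congr Quat => /=; ring. Qed.
Lemma qmulA : associative qmul.
Proof. by case=> ????[????][????]; congr Quat => /=; ring. Qed.
Lemma qmul1 : left_id qone qmul.
Proof. by case=> ????; congr Quat => /=; ring. Qed.
Lemma qmulr1 : right_id qone qmul.
Proof. by case=> ????; congr Quat => /=; ring. Qed.
Lemma qmulDl : left_distributive qmul qadd.
Proof. by case=> ????[????][????]; congr Quat => /=; ring. Qed.
Lemma qmulDr : right_distributive qmul qadd.
Proof. by case=> ????[????][????]; congr Quat => /=; ring. Qed.
Lemma qone_neq0 : qone != qzero.
Proof. by apply/eqP => -[] /eqP; rewrite oner_eq0. Qed.

HB.instance Definition _ := GRing.isNzRing.Build quat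
  qaddA qaddC qadd0 qaddN qmulA qmul1 qmulr1 qmulDl qmulDr qone_neq0.

End Quaternions.

(* H[q]        = {poly quat R}            (slice regular polynomials, *-product = poly product)
   H[q1,q2]    = {poly {poly quat R}}     (outer variable q1, coefficients P_k(q2) in H[q2];
                                           the *-product is the product of this ring)       *)

Definition deg_q1 (S : nzRingType) (P : {poly {poly S}}) : nat := (size P).-1.
Definition deg_q2 (S : nzRingType) (P : {poly {poly S}}) : nat := (size (swapXY P)).-1.

(* Sylvester matrix of P = sum_k X^k P_k, Q = sum_k X^k Q_k (n = deg P, m = deg Q):
   column j < m carries P_0..P_n in rows j..j+n, column m+j (j < n) carries
   Q_0..Q_m in rows j..j+m (0-indexed). *)
Definition sylvester (S : nzRingType) (P Q : {poly S}) :
  'M[S]_((size P).-1 + (size Q).-1) :=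
  \matrix_(i, j)
    if (j < (size Q).-1)%N then (if (j <= i)%N then P`_(i - j) else 0)
    else (if (j - (size Q).-1 <= i)%N then Q`_(i - (j - (size Q).-1)) else 0).

(* L is (a model of) the skew field of quotients of the Ore domain H[q]:
   a division ring containing H[q] (via iota) in which every element is a
   right quotient a b^-1 and a left quotient b^-1 a of elements of H[q]. *)
Definition skew_field_of_quotients (A : nzRingType) (L : unitRingType)
    (iota : {rmorphism A -> L}) : Prop :=
  [/\ forall x : L, x != 0 -> x \is a GRing.unit,
      injective iota,
      forall x : L, exists a b, b != 0 /\ x = iota a * (iota b)^-1
    & forall x : L, exists a b, b != 0 /\ x = (iota b)^-1 * iota a].

(* Dieudonne determinant Det*_N(M) is the zero class [0] exactly when, by its
   definition, M is not in GL(N, L) (on GL(N,L) it takes values in the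
   abelianised multiplicative group, never [0]). *)
Definition dieudonne_det_zero (L : unitRingType) (N : nat) (M : 'M[L]_N) : Prop :=
  ~ (exists M' : 'M[L]_N, M *m M' = 1%:M /\ M' *m M = 1%:M).

Definition res_q1_zero (S : nzRingType) (L : unitRingType) (iota : {rmorphism {poly S} -> L})
  (P Q : {poly {poly S}}) : Prop :=
  dieudonne_det_zero (map_mx iota (sylvester P Q)).
Definition res_q2_zero (S : nzRingType) (L : unitRingType) (iota : {rmorphism {poly S} -> L})
  (P Q : {poly {poly S}}) : Prop :=
  dieudonne_det_zero (map_mx iota (sylvester (swapXY P) (swapXY Q))).

(* Main.v *)
Require Import Defs.
From HB Require Import structures.
From mathcomp Require Import all_boot all_order all_algebra all_fingroup.
From mathcomp Require Import reals.
From mathcomp Require Import zify.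
Import Order.TTheory GRing.Theory Num.Theory.
Local Open Scope ring_scope.
Set Implicit Arguments. Unset Strict Implicit. Unset Printing Implicit Defensive.
Section LA.
Variable L : unitRingType.
Hypothesis HLu : forall x : L, x != 0 -> x \is a GRing.unit.

Definition kor N (M : 'M[L]_N) :=
  (exists v : 'cV_N, v != 0 /\ M *m v = 0) \/
  (exists M', M *m M' = 1%:M /\ M' *m M = 1%:M).

Lemma tperm_mx2 N (i j : 'I_N) : tperm_mx i j *m tperm_mx i j = 1%:M :> 'M[L]_N.
Proof.
rewrite /tperm_mx -perm_mxM -perm_mx1; congr perm_mx.
by apply/permP => x; rewrite permM tpermK perm1.
Qed.

Lemma schur N (M : 'M[L]_(1 + N)) : (forall S : 'M[L]_N, kor S) ->
  M 0 0 != 0 -> kor M.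
Proof.
move=> IH nz.
set a := ulsubmx M; set b := ursubmx M; set c := dlsubmx M; set d := drsubmx M.
set ai := ((M 0 0)^-1)%:M : 'M[L]_1.
have ea : a = (M 0 0)%:M.
  by rewrite [a]mx11_scalar /a !mxE (_ : lshift N 0 = 0) //; exact/val_inj.
have aai : a *m ai = 1%:M by rewrite ea -scalar_mxM mulrV ?HLu.
have aia : ai *m a = 1%:M by rewrite ea -scalar_mxM mulVr ?HLu.
have aaiK p (X : 'M_(p, 1)) : X *m a *m ai = X by rewrite -mulmxA aai mulmx1.
have aiaK p (X : 'M_(p, 1)) : X *m ai *m a = X by rewrite -mulmxA aia mulmx1.
have eM : M = block_mx a b c d by rewrite submxK.
case: (IH (d - c *m ai *m b)) => [[u [u0 Su]]|[T [ST TS]]].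
  left; exists (col_mx (- (ai *m (b *m u))) u); split.
    by apply: contra u0 => /eqP /(congr1 dsubmx); rewrite col_mxKd => ->; apply/eqP/matrixP => i j; rewrite !mxE.
  rewrite eM mul_block_col !mulmxN !mulmxA aai mul1mx addNr.
  rewrite mulmxBl in Su.
  by rewrite addrC Su col_mx0.
right.
exists (block_mx (ai + ai *m b *m T *m c *m ai) (- (ai *m b *m T)) (- (T *m c *m ai)) T).
have dT : d *m T = 1%:M + c *m ai *m b *m T.
  by rewrite -ST mulmxBl -addrA addNr addr0.
have Td p (Y : 'M_(p, N)) : Y *m T *m d = Y + Y *m T *m c *m ai *m b.
  by rewrite -mulmxA -[X in X + _](mulmx1 Y) -TS !mulmxBr !mulmxA -addrA addNr addr0.
rewrite eM; split; rewrite mulmx_block scalar_mx_block; congr (block_mx _ _ _ _).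
- by rewrite !mulmxDr !mulmxN !mulmxA aai mul1mx addrK.
- by rewrite !mulmxN !mulmxA aai mul1mx addNr.
- by rewrite !mulmxDr !mulmxN !mulmxA dT !mulmxDl mul1mx subrr.
- by rewrite !mulmxN !mulmxA dT [1%:M + _]addrC addKr.
- by rewrite !mulmxDl !mulNmx ?mulmxA aia !aiaK addrK.
- by rewrite !mulmxDl !mulNmx ?mulmxA Td subrr.
- by rewrite !mulNmx ?mulmxA aiaK addNr.
- have := Td _ 1%:M; rewrite !mul1mx => ->.
  by rewrite !mulNmx ?mulmxA [1%:M + _]addrC addKr.
Qed.

Lemma kor_all N (M : 'M[L]_N) : kor M.
Proof.
elim: N M => [|N IH] M.
  by right; exists 0; split; apply/matrixP => [[]].
have [/forallP allz|] := boolP [forall i, M i 0 == 0].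
  left; exists (delta_mx 0 0); split.
    by apply/negP => /eqP/matrixP/(_ 0 0); rewrite !mxE !eqxx /= => /eqP; rewrite oner_eq0.
  by rewrite -colE; apply/matrixP => i j; rewrite !mxE (eqP (allz i)).
rewrite negb_forall => /existsP [i nzi].
set E := tperm_mx (0 : 'I_N.+1) i : 'M[L]_N.+1.
have EE : E *m E = 1%:M by apply: tperm_mx2.
have := @schur N (E *m M) IH.
have -> : (E *m M) 0 0 = M i 0 by rewrite -xrowE xrowEsub mxE tpermL.
move=> /(_ nzi) [[v [v0 Mv]]|[X [MX XM]]].
  left; exists v; split=> //.
  have -> : M *m v = E *m (E *m M *m v) by rewrite !mulmxA EE mul1mx.
  by rewrite Mv mulmx0.
right; exists (X *m E); split.
  have -> : M = E *m (E *m M) by rewrite mulmxA EE mul1mx.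
  by rewrite -mulmxA (mulmxA (E *m M)) MX mul1mx EE.
by rewrite -mulmxA.
Qed.
End LA.
Lemma sum_pad (V : nmodType) a c (F : nat -> V) : (a <= c)%N ->
  \sum_(0 <= j < a) F j = \sum_(0 <= j < c) (if (j < a)%N then F j else 0).
Proof.
move=> ac; rewrite (@big_cat_nat _ _ _ a 0 c) // /= [X in _ + X]big_nat_cond.
rewrite [X in _ + X]big1 ?addr0.
  by apply: eq_big_nat => j /andP[_ ->].
by move=> j /andP[/andP[aj _] _]; rewrite ltnNge aj.
Qed.

Lemma sum_trunc (V : nmodType) a b (F G : nat -> V) :
  (forall j, (j < maxn a b)%N -> (if (j < a)%N then F j else 0) = (if (j < b)%N then G j else 0)) ->
  \sum_(0 <= j < a) F j = \sum_(0 <= j < b) G j.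
Proof.
move=> e; rewrite (sum_pad F (leq_maxl a b)) (sum_pad G (leq_maxr a b)).
by apply: eq_big_nat => j /andP[_ /e].
Qed.

Lemma sylv_coef (T : nzRingType) (P Q : {poly T}) (f : nat -> T)
  (i : 'I_((size P).-1 + (size Q).-1)) :
  (sylvester P Q *m \col_j f j) i 0 =
  (P * \poly_(j < (size Q).-1) f j + Q * \poly_(j < (size P).-1) f (j + (size Q).-1)%N)`_i.
Proof.
set n := (size P).-1; set m := (size Q).-1.
rewrite coefD !coefMr mxE.
have -> : \sum_(j < n + m) sylvester P Q i j * (\col_j0 f j0) j 0 =
  \sum_(0 <= j < n + m) (if (j < m)%N then (if (j <= i)%N then P`_(i - j) else 0)
      else (if (j - m <= i)%N then Q`_(i - (j - m)) else 0)) * f j.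
  by rewrite big_mkord; apply: eq_bigr => j _; rewrite !mxE.
rewrite (@big_cat_nat _ _ _ m) //= ?leq_addl //; congr (_ + _).
  rewrite -(big_mkord xpredT (fun j => P`_(i - j) * (\poly_(j0 < m) f j0)`_j)); apply: sum_trunc => j _.
  rewrite coef_poly ltnS; case: (ltnP j m) => jm; case: (leqP j i) => ji //.
    by rewrite mul0r.
  by rewrite mulr0.
have -> : \sum_(m <= j < n + m) (if (j < m)%N then (if (j <= i)%N then P`_(i - j) else 0)
      else (if (j - m <= i)%N then Q`_(i - (j - m)) else 0)) * f j =
  \sum_(0 <= j < n) (if (j <= i)%N then Q`_(i - j) else 0) * f (j + m)%N.
  rewrite -{1}(add0n m) big_addn addnK; apply: eq_big_nat => j _.
  by rewrite ltnNge leq_addl /= addnK.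
rewrite -(big_mkord xpredT (fun j => Q`_(i - j) * (\poly_(j0 < n) f (j0 + m)%N)`_j)); apply: sum_trunc => j _.
rewrite coef_poly ltnS; case: (ltnP j n) => jn; case: (leqP j i) => ji //.
  by rewrite mul0r.
by rewrite mulr0.
Qed.

Section Main.
Variables (S : nzRingType) (L : unitRingType) (iota : {rmorphism {poly S} -> L}).
Hypothesis HL : skew_field_of_quotients iota.

Lemma HLu : forall x : L, x != 0 -> x \is a GRing.unit.
Proof. by case: HL. Qed.

Lemma iota_inj : injective iota.
Proof. by case: HL. Qed.

Lemma iota_eq0 a : (iota a == 0) = (a == 0).
Proof. by apply/eqP/eqP => [|->]; rewrite ?rmorph0 // -(rmorph0 iota) => /iota_inj. Qed.

Lemma pdom (a b : {poly S}) : a != 0 -> b != 0 -> a * b != 0.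
Proof.
rewrite -!iota_eq0 rmorphM /= => /HLu ua /HLu ub.
apply/eqP => e; have := unitrMr (iota b) ua; by rewrite e unitr0 ub.
Qed.

Lemma ppdom (A B : {poly {poly S}}) : A != 0 -> B != 0 -> A * B != 0.
Proof.
move=> A0 B0; rewrite -size_poly_eq0 size_proper_mul; last by rewrite pdom ?lead_coef_eq0.
by move: A0 B0; rewrite -!size_poly_gt0; lia.
Qed.

Lemma clear_den (s : seq L) : exists c : L, c \is a GRing.unit /\
  forall x, x \in s -> exists a, x * c = iota a.
Proof.
elim: s => [|x s [c [uc IH]]]; first by exists 1; split; rewrite ?unitr1.
case: HL => _ _ Hr _.
have [a [b [b0 e]]] := Hr (x * c).
have ub : iota b \is a GRing.unit by rewrite HLu ?iota_eq0.
exists (c * iota b); split; first by rewrite unitrMl.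
move=> y; rewrite in_cons => /orP[/eqP ->|/IH [a' e']].
  by exists a; rewrite mulrA e mulrVK.
by exists (a' * b); rewrite mulrA e' rmorphM.
Qed.

Lemma part1 (P Q : {poly {poly S}}) (P0 : P != 0) (Q0 : Q != 0) :
  res_q1_zero iota P Q <-> exists H K : {poly {poly S}}, [/\ H != 0, K != 0,
       (deg_q1 H < deg_q1 Q)%N, (deg_q1 K < deg_q1 P)%N & P * H + Q * K = 0].
Proof.
rewrite /res_q1_zero /dieudonne_det_zero /deg_q1.
set n := (size P).-1; set m := (size Q).-1.
set A := sylvester P Q.
have sP : size P = n.+1 by rewrite /n prednK // size_poly_gt0.
have sQ : size Q = m.+1 by rewrite /m prednK // size_poly_gt0.
have key (f : nat -> {poly S}) : A *m \col_j f j = 0 ->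
    P * \poly_(j < m) f j + Q * \poly_(j < n) f (j + m)%N = 0.
  move=> Af; apply/polyP => i; rewrite coef0.
  case: (ltnP i (n + m)) => im.
    by have := sylv_coef f (Ordinal im); rewrite Af mxE => <-.
  rewrite nth_default //; apply: leq_trans (size_polyD _ _) _.
  rewrite geq_max; apply/andP; split; apply: leq_trans (size_polyMleq _ _) _;
    rewrite ?sP ?sQ.
    by rewrite addSn /=; apply: leq_trans im; rewrite leq_add2l size_poly.
  by rewrite addSn /= addnC; apply: leq_trans im; rewrite leq_add2r size_poly.
split.
- move=> nInv.
  have [[v [v0 Mv]]|//] := kor_all HLu (map_mx iota A).
  have [c [uc Hc]] := clear_den [seq v j 0 | j <- enum 'I_(n + m)].
  have : forall j : 'I_(n + m), exists a, v j 0 * c = iota a.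
    by move=> j; apply: Hc; apply: map_f; rewrite mem_enum.
  case/fin_all_exists => w Hw.
  pose f (j : nat) := if (insub j : option 'I_(n + m)) is Some k then w k else 0.
  have fE (j : 'I_(n + m)) : f j = w j by rewrite /f valK.
  have Aw : A *m \col_j f j = 0.
    apply/matrixP => i j; rewrite [RHS]mxE; apply: iota_inj; rewrite rmorph0.
    have /matrixP /(_ i j) := map_mxM iota A (\col_j f j).
    rewrite [LHS]mxE => ->.
    have -> : map_mx iota (\col_j f j) = v *m c%:M.
      apply/matrixP => k l; rewrite !mxE fE (ord1 l) -Hw big_ord1 !mxE /=.
      by rewrite mulr1n.
    by rewrite mulmxA Mv mul0mx mxE.
  have HK0 := key f Aw.
  set H := \poly_(j < m) f j in HK0; set K := \poly_(j < n) f (j + m)%N in HK0.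
  have sH : (size H <= m)%N by apply: size_poly.
  have sK : (size K <= n)%N by apply: size_poly.
  have : (H != 0) || (K != 0).
    have [j vj] : exists j, v j 0 != 0.
      apply/existsP; apply: contraR v0; rewrite negb_exists => /forallP vz.
      by apply/eqP/matrixP => i l; rewrite (ord1 l) mxE; apply/eqP; rewrite -[_ == _]negbK vz.
    have : f j != 0.
      rewrite fE -iota_eq0 -Hw; apply: contra vj => /eqP e.
      by rewrite -[v j 0](mulrK uc) e mul0r.
    case: (ltnP j m) => jm fj.
      by apply/orP; left; apply/eqP => /polyP /(_ j); rewrite coef_poly jm coef0; apply/eqP.
    apply/orP; right; apply/eqP => /polyP /(_ (j - m)%N); rewrite coef_poly coef0.
    have hj : (j < n + m)%N := ltn_ord j.
    by rewrite subnK // ifT; [exact/eqP | lia].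
  move=> HorK.
  have H0 : H != 0.
    apply/negP => /eqP H0; move: HorK HK0; rewrite H0 eqxx /= mulr0 add0r => K0.
    by apply/eqP; apply: ppdom.
  have K0 : K != 0.
    apply/negP => /eqP K0; move: HK0; rewrite K0 mulr0 addr0 => /eqP.
    by apply/negP; apply: ppdom.
  exists H, K; split => //.
    by move: sH H0; rewrite -size_poly_gt0; case: (size H) => [|s] //= h _; exact: h.
  by move: sK K0; rewrite -size_poly_gt0; case: (size K) => [|s] //= h _; exact: h.
- move=> [H [K [H0 K0 dH dK e]]] [M' [MM' M'M]].
  have sH : (size H <= m)%N by move: dH H0; rewrite -size_poly_gt0 -/m; lia.
  have sK : (size K <= n)%N by move: dK K0; rewrite -size_poly_gt0 -/n; lia.
  pose f (j : nat) := if (j < m)%N then H`_j else K`_(j - m).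
  have eH : \poly_(j < m) f j = H.
    apply/polyP => k; rewrite coef_poly /f; case: ltnP => // km.
    by rewrite nth_default //; apply: leq_trans sH km.
  have eK : \poly_(j < n) f (j + m)%N = K.
    apply/polyP => k; rewrite coef_poly /f [(k + m < m)%N]ltnNge leq_addl /= addnK.
    by case: ltnP => // kn; rewrite nth_default //; apply: leq_trans sK kn.
  have Aw : A *m \col_j f j = 0.
    apply/matrixP => i j; rewrite (ord1 j) sylv_coef -/n -/m eH eK e mxE coef0 //.
  have km : ((size H).-1 < n + m)%N by move: dH; rewrite -/m; lia.
  have Mw : map_mx iota A *m map_mx iota (\col_j f j) = 0.
    by rewrite -map_mxM Aw; apply/matrixP => i j; rewrite !mxE rmorph0.
  have : map_mx iota (\col_(j < n + m) f j) = 0.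
    by rewrite -(mul1mx (map_mx iota (\col_j f j))) -M'M -mulmxA Mw mulmx0.
  move/matrixP => /(_ (Ordinal km) 0); rewrite !mxE /f /=.
  have -> : ((size H).-1 < m)%N by move: dH; rewrite -/m.
  move/eqP; rewrite iota_eq0.
  by have := H0; rewrite -lead_coef_eq0 => /negP.
Qed.

End Main.

Unset Implicit Arguments.
Theorem lemma4p4 (R : realType) (L : unitRingType)
  (iota : {rmorphism {poly quat R} -> L})
  (HL : skew_field_of_quotients iota)
  (P Q : {poly {poly quat R}}) (P0 : P != 0) (Q0 : Q != 0) :
  (res_q1_zero iota P Q <->
     exists H K : {poly {poly quat R}}, [/\ H != 0, K != 0,
       (deg_q1 H < deg_q1 Q)%N, (deg_q1 K < deg_q1 P)%N & P * H + Q * K = 0])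
  /\
  (res_q2_zero iota P Q <->
     exists H K : {poly {poly quat R}}, [/\ H != 0, K != 0,
       (deg_q2 H < deg_q2 Q)%N, (deg_q2 K < deg_q2 P)%N & P * H + Q * K = 0]).
Proof.
split; first exact: part1.
have sP0 : swapXY P != 0 by rewrite swapXY_eq0.
have sQ0 : swapXY Q != 0 by rewrite swapXY_eq0.
have h := part1 HL sP0 sQ0.
apply: iff_trans h _; rewrite /deg_q2.
split=> [[H [K [H0 K0 dH dK e]]]|[H [K [H0 K0 dH dK e]]]].
- exists (swapXY H), (swapXY K); rewrite !swapXYK !swapXY_eq0; split=> //.
  have := congr1 swapXY e.
  by rewrite rmorph0 rmorphD !rmorphM /= !swapXYK.
- exists (swapXY H), (swapXY K); rewrite !swapXY_eq0; split=> //.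
  by rewrite -!rmorphM -rmorphD /= e rmorph0.
Qed.
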